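(* Let $N\ge2$, $\hbar>0$, $\lambda\in\mathbb{R}^N$, $\mu^{(N)}_i=-\imath\hbar^{-1}\lambda_i-\frac12(N-2i+1)$, and let $\xi^{(i)}_R,\xi^{(i)}_L$ ($i=1,\dots,N-1$) be nonzero complex numbers. Consider functions of the real variables $T_{k,i}$, $1\le i\le k\le N-1$, with the convention $T_{N,i}=0$, and the first order differential operators $$E^{(N)}_{i,i+1}=\sum_{n=1}^i\Big(\sum_{k=n}^ie^{T_{N+k-i,k}-T_{N+k-i-1,k}}\Big)\Big(\frac{\partial}{\partial T_{N+n-i-1,n}}-\frac{\partial}{\partial T_{N+n-i-1,n-1}}\Big),$$ $$E^{(N)}_{i+1,i}=\sum_{k=i}^{N-1}e^{T_{k,i}-T_{k+1,i+1}}\Big(\mu^{(N)}_i-\mu^{(N)}_{i+1}+\sum_{s=i}^k\Big(\frac{\partial}{\partial T_{s,i+1}}-\frac{\partial}{\partial T_{s,i}}\Big)\Big),$$ for $i=1,\dots,N-1$ (derivatives with respect to symbols $T_{k,j}$ with $j>k$ or $j=0$ are omitted, empty sums are zero). Then the functions $$\psi^{(N)}_R=\exp\Big\{\sum_{i=1}^{N-1}\xi^{(i)}_R\sum_{k=i}^{N-1}e^{T_{k,i}-T_{k+1,i+1}}\Big\},$$ $$\psi^{(N)}_L=\exp\Big\{\sum_{k=1}^{N-1}\sum_{i=1}^k(\mu^{(N)}_k-\mu^{(N)}_{k+1})T_{k,i}+\sum_{i=1}^{N-1}\xi^{(i)}_L\sum_{k=1}^{N-i}e^{T_{k+i,k}-T_{k+i-1,k}}\Big\}$$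 satisfy, for all $i=1,\dots,N-1$, $$E^{(N)}_{i,i+1}\psi^{(N)}_R=\xi^{(i)}_R\psi^{(N)}_R,\qquad E^{(N)}_{i+1,i}\psi^{(N)}_L=\xi^{(N-i)}_L\psi^{(N)}_L.$$
   Context: These operators are the images of the simple root generators of $\mathfrak{gl}(N)$ in the principal series representation realized on functions of the totally positive unipotent upper-triangular matrices, parametrized by the coordinates $T_{k,i}$ ($1\le i\le k\le N-1$, $T_{N,i}=0$) via $x(T)=\tilde U_2U_2^{-1}\cdots\tilde U_{N-1}U_{N-1}^{-1}\tilde U_N$ with $U_k=\sum_{i\le k}e^{T_{k,i}}e_{i,i}+\sum_{i>k}e_{i,i}$, $\tilde U_k=U_k+\sum_{i=1}^{k-1}e^{T_{k-1,i}}e_{i,i+1}$. *)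

(* Defs.v *)
From Stdlib Require Import Reals Arith.
From Coquelicot Require Import Coquelicot.
Open Scope R_scope.

Definition Cexp (z : C) : C :=
  (exp (fst z) * cos (snd z), exp (fst z) * sin (snd z)).

(* A point of the coordinate space: T k i is the value of T_{k,i}.
   Only the coordinates with 1 <= i <= k <= N-1 are genuine variables. *)
Definition Coords := nat -> nat -> R.

Definition tri (N k i : nat) : bool :=
  (1 <=? i)%nat && (i <=? k)%nat && (k <=? N - 1)%nat.

(* value of the symbol T_{k,i}; in particular T_{N,i} = 0 *)
Definition Tv (N : nat) (T : Coords) (k i : nat) : R :=
  if tri N k i then T k i else 0.

Definition upd (T : Coords) (k i : nat) (t : R) : Coords :=
  fun k' i' => if (Nat.eqb k' k && Nat.eqb i' i)%bool then t else T k' i'.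

(* partial derivative d/dT_{k,i} of a complex valued function (computed on
   real and imaginary parts); derivatives w.r.t. symbols T_{k,i} that are not
   variables (i > k, i = 0, ...) are omitted, i.e. contribute 0. *)
Definition pderiv (N : nat) (f : Coords -> C) (k i : nat) (T : Coords) : C :=
  if tri N k i then
    (Derive (fun t => fst (f (upd T k i t))) (T k i),
     Derive (fun t => snd (f (upd T k i t))) (T k i))
  else 0%C.

Definition mu (N : nat) (hbar : R) (lam : nat -> R) (i : nat) : C :=
  (- ((INR N - 2 * INR i + 1) / 2), - (lam i / hbar)).

Definition csum (a : nat -> C) (n m : nat) : C := sum_n_m (G := C_AbelianGroup) a n m.

Definition E_up (N : nat) (f : Coords -> C) (i : nat) (T : Coords) : C :=
  csum (fun n =>
    (csum (fun k => RtoC (exp (Tv N T (N + k - i) k - Tv N T (N + k - i - 1) k))) n i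
     * (pderiv N f (N + n - i - 1) n T - pderiv N f (N + n - i - 1) (n - 1) T))%C)
    1 i.

Definition E_down (N : nat) (hbar : R) (lam : nat -> R) (f : Coords -> C)
    (i : nat) (T : Coords) : C :=
  csum (fun k =>
    (RtoC (exp (Tv N T k i - Tv N T (k + 1) (i + 1)))
     * ((mu N hbar lam i - mu N hbar lam (i + 1)) * f T
        + csum (fun s => pderiv N f s (i + 1) T - pderiv N f s i T) i k))%C)
    i (N - 1).

Definition psiR (N : nat) (xiR : nat -> C) (T : Coords) : C :=
  Cexp (csum (fun i =>
    (xiR i * csum (fun k => RtoC (exp (Tv N T k i - Tv N T (k + 1) (i + 1)))) i (N - 1))%C)
    1 (N - 1)).

Definition psiL (N : nat) (hbar : R) (lam : nat -> R) (xiL : nat -> C)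
    (T : Coords) : C :=
  Cexp (csum (fun k => csum (fun i =>
            ((mu N hbar lam k - mu N hbar lam (k + 1)) * RtoC (Tv N T k i))%C) 1 k)
          1 (N - 1)
        + csum (fun i =>
            (xiL i * csum (fun k => RtoC (exp (Tv N T (k + i) k - Tv N T (k + i - 1) k)))
                            1 (N - i))%C)
          1 (N - 1))%C.

(* Main.v *)
Require Import Defs.
From Stdlib Require Import Reals Arith Lia Lra List FunctionalExtensionality.
From Coquelicot Require Import Coquelicot.
Import ListNotations.
Open Scope R_scope.

Arguments Tv : simpl never.

Lemma isd_plus (f g : R -> R) x a b : is_derive f x a -> is_derive g x b ->
  is_derive (fun t => f t + g t) x (a + b).
Proof. intros. apply (is_derive_plus f g x a b); auto. Qed.
Lemma isd_minus (f g : R -> R) x a b : is_derive f x a -> is_derive g x b ->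
  is_derive (fun t => f t - g t) x (a - b).
Proof. intros. apply (is_derive_minus f g x a b); auto. Qed.
Lemma isd_mult (f g : R -> R) x a b : is_derive f x a -> is_derive g x b ->
  is_derive (fun t => f t * g t) x (a * g x + f x * b).
Proof. intros. apply (is_derive_mult f g x a b); auto. intros; apply Rmult_comm. Qed.
Lemma isd_const (c : R) x : is_derive (fun _ => c) x 0.
Proof. apply (is_derive_const c x). Qed.
Lemma isd_id x : is_derive (fun t => t) x 1.
Proof. apply (is_derive_id x). Qed.
Lemma isd_val (f : R -> R) x a b : is_derive f x a -> a = b -> is_derive f x b.
Proof. intros H ->; auto. Qed.
Lemma isd_ext (f g : R -> R) x a : (forall t, f t = g t) -> is_derive f x a -> is_derive g x a.
Proof. intros. eapply is_derive_ext; eauto. Qed.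
Lemma isd_exp (f : R -> R) x a : is_derive f x a -> is_derive (fun t => exp (f t)) x (a * exp (f x)).
Proof. intros. eapply isd_val. apply (is_derive_comp exp f x (exp (f x)) a); auto.
  apply is_derive_exp. simpl. reflexivity. Qed.
Lemma isd_cos (f : R -> R) x a : is_derive f x a -> is_derive (fun t => cos (f t)) x (a * - sin (f x)).
Proof. intros. eapply isd_val. apply (is_derive_comp cos f x (- sin (f x)) a); auto.
  apply is_derive_cos. simpl. reflexivity. Qed.
Lemma isd_sin (f : R -> R) x a : is_derive f x a -> is_derive (fun t => sin (f t)) x (a * cos (f x)).
Proof. intros. eapply isd_val. apply (is_derive_comp sin f x (cos (f x)) a); auto.
  apply is_derive_sin. simpl. reflexivity. Qed.

Definition cder (g : R -> C) (x : R) (d : C) :=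
  is_derive (fun t => fst (g t)) x (fst d) /\ is_derive (fun t => snd (g t)) x (snd d).

Lemma cder_val g x d d' : cder g x d -> d = d' -> cder g x d'.
Proof. intros H ->; auto. Qed.
Lemma cder_ext g h x d : (forall t, g t = h t) -> cder g x d -> cder h x d.
Proof. intros E [H1 H2]; split; eapply isd_ext; try eassumption; intros; simpl; rewrite E; auto. Qed.
Lemma cder_plus g h x a b : cder g x a -> cder h x b -> cder (fun t => (g t + h t)%C) x (a + b)%C.
Proof. intros [H1 H2] [H3 H4]; split; simpl; apply isd_plus; auto. Qed.
Lemma cder_minus g h x a b : cder g x a -> cder h x b -> cder (fun t => (g t - h t)%C) x (a - b)%C.
Proof. intros [H1 H2] [H3 H4]; split; simpl; eapply isd_val; try (apply isd_minus; eassumption); simpl; ring. Qed.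
Lemma cder_mult g h x a b : cder g x a -> cder h x b ->
  cder (fun t => (g t * h t)%C) x (a * h x + g x * b)%C.
Proof. intros [H1 H2] [H3 H4]; split; simpl.
  - eapply isd_val. apply isd_minus; apply isd_mult; eauto. simpl; ring.
  - eapply isd_val. apply isd_plus; apply isd_mult; eauto. simpl; ring. Qed.
Lemma cder_const (c : C) x : cder (fun _ => c) x 0%C.
Proof. split; simpl; apply isd_const. Qed.
Lemma cder_RtoC (f : R -> R) x a : is_derive f x a -> cder (fun t => RtoC (f t)) x (RtoC a).
Proof. intros; split; simpl; auto. apply isd_const. Qed.
Lemma cder_Cexp g x d : cder g x d -> cder (fun t => Cexp (g t)) x (d * Cexp (g x))%C.
Proof. intros [H1 H2]; unfold Cexp; split; simpl.
  - eapply isd_val. apply isd_mult. apply isd_exp; eauto. apply isd_cos; eauto. simpl; ring.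
  - eapply isd_val. apply isd_mult. apply isd_exp; eauto. apply isd_sin; eauto. simpl; ring. Qed.

Lemma cder_sum (g : nat -> R -> C) (d : nat -> C) x n m :
  (forall k, (n <= k <= m)%nat -> cder (g k) x (d k)) ->
  cder (fun t => csum (fun k => g k t) n m) x (csum d n m).
Proof.
  unfold csum. induction m; intros H.
  - destruct n.
    + apply (cder_ext (g 0%nat)). intros; symmetry; apply (sum_n_n (fun k => g k t)).
      rewrite sum_n_n. apply H; lia.
    + apply (cder_ext (fun _ => 0%C)). intros; symmetry; apply (sum_n_m_zero (fun k => g k t)); lia.
      rewrite sum_n_m_zero by lia. apply cder_const.
  - destruct (le_lt_dec n (S m)).
    + apply (cder_ext (fun t => (sum_n_m (G:=C_AbelianGroup) (fun k => g k t) n m + g (S m) t)%C)).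
      intros; symmetry; apply (sum_n_Sm (fun k => g k t)); lia.
      rewrite sum_n_Sm by lia. apply cder_plus. apply IHm. intros; apply H; lia. apply H; lia.
    + apply (cder_ext (fun _ => 0%C)). intros; symmetry; apply (sum_n_m_zero (fun k => g k t)); lia.
      rewrite sum_n_m_zero by lia. apply cder_const.
Qed.

Definition del (N a b k j : nat) : R :=
  if (tri N k j && (k =? a) && (j =? b))%bool then 1 else 0.

Lemma Tv_upd N T a b k j t : Tv N (upd T a b t) k j =
  if (tri N k j && (k =? a) && (j =? b))%bool then t else Tv N T k j.
Proof. unfold Tv, upd. destruct (tri N k j); simpl; auto. Qed.

Lemma isd_Tv N T a b k j x : is_derive (fun t => Tv N (upd T a b t) k j) x (del N a b k j).
Proof. unfold del. apply (isd_ext (fun t => if (tri N k j && (k =? a) && (j =? b))%bool then t else Tv N T k j)).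
  intros; symmetry; apply Tv_upd.
  destruct (tri N k j && (k =? a) && (j =? b))%bool. apply isd_id. apply isd_const. Qed.

Lemma upd_same T a b : upd T a b (T a b) = T.
Proof. apply functional_extensionality; intro k; apply functional_extensionality; intro j.
  unfold upd. destruct (Nat.eqb_spec k a), (Nat.eqb_spec j b); subst; simpl; auto. Qed.

Lemma del_nontri N a b k j : tri N a b = false -> del N a b k j = 0.
Proof. intros H; unfold del. destruct (Nat.eqb_spec k a), (Nat.eqb_spec j b); subst;
  rewrite ?H; simpl; rewrite ?Bool.andb_false_r; auto. Qed.

Lemma pderiv_Cexp N (S : Coords -> C) (D : nat -> nat -> C) a b T :
  (forall a b, tri N a b = true -> cder (fun t => S (upd T a b t)) (T a b) (D a b)) ->
  (forall a b, tri N a b = false -> D a b = 0%C) ->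
  pderiv N (fun T => Cexp (S T)) a b T = (D a b * Cexp (S T))%C.
Proof.
  intros H1 H2. unfold pderiv. destruct (tri N a b) eqn:E.
  - destruct (cder_Cexp _ _ _ (H1 a b E)) as [d1 d2].
    rewrite upd_same in d1, d2.
    apply is_derive_unique in d1. apply is_derive_unique in d2.
    apply injective_projections; [exact d1 | exact d2].
  - rewrite H2 by auto. ring.
Qed.


Definition rsum (f : nat -> R) n m : R := sum_n_m (G := R_AbelianGroup) f n m.

Section G.
Context {G : AbelianMonoid}.

Lemma gsum_zero (f : nat -> G) n m : (forall k, (n <= k <= m)%nat -> f k = zero) -> sum_n_m f n m = zero.
Proof. intros H. rewrite (sum_n_m_ext_loc f (fun _ => zero)) by auto. apply sum_n_m_const_zero. Qed.

Lemma gsum_single (f : nat -> G) n m c :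
  (forall k, (n <= k <= m)%nat -> k <> c -> f k = zero) ->
  sum_n_m f n m = if ((n <=? c) && (c <=? m))%bool then f c else zero.
Proof.
  induction m; intros H.
  - destruct n.
    + rewrite sum_n_n. destruct (Nat.eqb_spec c 0). subst; simpl; auto.
      destruct c; simpl. lia. rewrite H; auto; lia.
    + rewrite sum_n_m_zero by lia. destruct (Nat.leb_spec (S n) c), (Nat.leb_spec c 0); simpl; auto; lia.
  - destruct (le_lt_dec n (S m)).
    + rewrite sum_n_Sm by lia. rewrite IHm by (intros; apply H; lia).
      destruct (Nat.eqb_spec c (S m)).
      * subst. destruct (Nat.leb_spec n (S m)); try lia. destruct (Nat.leb_spec (S m) m); try lia.
        rewrite Nat.leb_refl. simpl. apply plus_zero_l.
      * rewrite (H (S m)) by lia. rewrite plus_zero_r.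
        destruct (Nat.leb_spec n c), (Nat.leb_spec c m), (Nat.leb_spec c (S m)); simpl; auto; lia.
    + rewrite sum_n_m_zero by lia. destruct (Nat.leb_spec n c), (Nat.leb_spec c (S m)); simpl; auto; lia.
Qed.

Lemma gsum_swap (f : nat -> nat -> G) a b c d :
  sum_n_m (fun x => sum_n_m (fun y => f x y) c d) a b =
  sum_n_m (fun y => sum_n_m (fun x => f x y) a b) c d.
Proof.
  induction b.
  - destruct a.
    + rewrite sum_n_n. apply sum_n_m_ext; intros; rewrite sum_n_n; auto.
    + rewrite sum_n_m_zero by lia. symmetry. apply gsum_zero. intros; apply sum_n_m_zero; lia.
  - destruct (le_lt_dec a (S b)).
    + rewrite sum_n_Sm by lia. rewrite IHb. rewrite <- sum_n_m_plus.
      apply sum_n_m_ext; intros; rewrite sum_n_Sm by lia; auto.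
    + rewrite sum_n_m_zero by lia. symmetry. apply gsum_zero. intros; apply sum_n_m_zero; lia.
Qed.
End G.

Lemma gsum_morph {G H : AbelianMonoid} (phi : G -> H) (f : nat -> G) n m :
  (forall x y, phi (plus x y) = plus (phi x) (phi y)) -> phi zero = zero ->
  phi (sum_n_m f n m) = sum_n_m (fun k => phi (f k)) n m.
Proof.
  intros Hp H0. induction m.
  - destruct n. rewrite !sum_n_n; auto. rewrite !sum_n_m_zero by lia; auto.
  - destruct (le_lt_dec n (S m)).
    + rewrite !sum_n_Sm by lia. rewrite Hp, IHm; auto.
    + rewrite !sum_n_m_zero by lia; auto.
Qed.

Lemma rsum_ext f g n m : (forall k, (n <= k <= m)%nat -> f k = g k) -> rsum f n m = rsum g n m.
Proof. intros H; apply sum_n_m_ext_loc; exact H. Qed.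
Lemma rsum_zero f n m : (forall k, (n <= k <= m)%nat -> f k = 0) -> rsum f n m = 0.
Proof. intros H; apply (gsum_zero (G:=R_AbelianGroup)); intros; apply H; auto. Qed.
Lemma rsum_single f n m c : (forall k, (n <= k <= m)%nat -> k <> c -> f k = 0) ->
  rsum f n m = if ((n <=? c) && (c <=? m))%bool then f c else 0.
Proof. intros H; apply (gsum_single (G:=R_AbelianGroup)); intros; apply H; auto. Qed.
Lemma rsum_plus f g n m : rsum (fun k => f k + g k) n m = rsum f n m + rsum g n m.
Proof. exact (sum_n_m_plus (G:=R_AbelianGroup) f g n m). Qed.
Lemma rsum_scal c f n m : rsum (fun k => c * f k) n m = c * rsum f n m.
Proof. exact (sum_n_m_mult_l (K := R_Ring) c f n m). Qed.
Lemma rsum_opp f n m : rsum (fun k => - f k) n m = - rsum f n m.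
Proof. rewrite <- (Rmult_1_l (rsum f n m)), Ropp_mult_distr_l, <- rsum_scal.
  apply rsum_ext; intros; ring. Qed.
Lemma rsum_minus f g n m : rsum (fun k => f k - g k) n m = rsum f n m - rsum g n m.
Proof. unfold Rminus. rewrite rsum_plus, rsum_opp; auto. Qed.
Lemma rsum_swap (f : nat -> nat -> R) a b c d :
  rsum (fun x => rsum (fun y => f x y) c d) a b = rsum (fun y => rsum (fun x => f x y) a b) c d.
Proof. exact (gsum_swap (G:=R_AbelianGroup) f a b c d). Qed.
Lemma rsum_Sn f n m : (n <= m)%nat -> rsum f n m = f n + rsum f (S n) m.
Proof. exact (sum_Sn_m (G:=R_AbelianGroup) f n m). Qed.
Lemma rsum_empty f n m : (m < n)%nat -> rsum f n m = 0.
Proof. exact (sum_n_m_zero (G:=R_AbelianGroup) f n m). Qed.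

Lemma fold_eq (L : list nat) (f g : nat -> R) n m : (forall c, In c L -> f c = g c) ->
  fold_right (fun c acc => (if ((n <=? c) && (c <=? m))%bool then f c else 0) + acc) 0 L =
  fold_right (fun c acc => (if ((n <=? c) && (c <=? m))%bool then g c else 0) + acc) 0 L.
Proof. induction L; simpl; intros H; auto. rewrite IHL, H; auto. Qed.

Lemma rsum_supp (L : list nat) f n m : NoDup L ->
  (forall k, (n <= k <= m)%nat -> ~ In k L -> f k = 0) ->
  rsum f n m = fold_right (fun c acc => (if ((n <=? c) && (c <=? m))%bool then f c else 0) + acc) 0 L.
Proof.
  revert f. induction L as [|c L IH]; intros f ND H.
  - simpl. apply rsum_zero. intros; apply H; auto.
  - inversion ND; subst. simpl.
    rewrite (rsum_ext f (fun k => (if k =? c then f k else 0) + (if k =? c then 0 else f k))).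
    2:{ intros; destruct (k =? c); ring. }
    rewrite rsum_plus. f_equal.
    + rewrite (rsum_single _ _ _ c). rewrite Nat.eqb_refl; auto.
      intros k _ Hk. apply Nat.eqb_neq in Hk; rewrite Hk; auto.
    + rewrite (IH (fun k => if k =? c then 0 else f k)); auto.
      * apply fold_eq. intros c' Hc'. destruct (Nat.eqb_spec c' c); auto. subst; contradiction.
      * intros k Hk Hn. destruct (Nat.eqb_spec k c); auto. apply H; auto. intros [E|E]; auto.
Qed.

Lemma csum_ext (f g : nat -> C) n m : (forall k, (n <= k <= m)%nat -> f k = g k) -> csum f n m = csum g n m.
Proof. intros H; apply sum_n_m_ext_loc; exact H. Qed.
Lemma csum_zero (f : nat -> C) n m : (forall k, (n <= k <= m)%nat -> f k = 0%C) -> csum f n m = 0%C.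
Proof. intros H; apply (gsum_zero (G:=C_AbelianGroup)); intros; apply H; auto. Qed.
Lemma csum_single (f : nat -> C) n m c : (forall k, (n <= k <= m)%nat -> k <> c -> f k = 0%C) ->
  csum f n m = if ((n <=? c) && (c <=? m))%bool then f c else 0%C.
Proof. intros H; apply (gsum_single (G:=C_AbelianGroup)); intros; apply H; auto. Qed.
Lemma csum_plus (f g : nat -> C) n m : csum (fun k => f k + g k)%C n m = (csum f n m + csum g n m)%C.
Proof. exact (sum_n_m_plus (G:=C_AbelianGroup) f g n m). Qed.
Lemma csum_scal (c : C) f n m : csum (fun k => c * f k)%C n m = (c * csum f n m)%C.
Proof. exact (sum_n_m_mult_l (K := C_Ring) c f n m). Qed.
Lemma csum_scal_r (c : C) f n m : csum (fun k => f k * c)%C n m = (csum f n m * c)%C.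
Proof. exact (sum_n_m_mult_r (K := C_Ring) c f n m). Qed.
Lemma csum_minus (f g : nat -> C) n m : csum (fun k => f k - g k)%C n m = (csum f n m - csum g n m)%C.
Proof. unfold Cminus. rewrite csum_plus. f_equal.
  rewrite <- (Cmult_1_l (csum g n m)). replace (- (1 * csum g n m))%C with ((-1) * csum g n m)%C by ring.
  rewrite <- csum_scal. apply csum_ext; intros; ring. Qed.
Lemma csum_swap (f : nat -> nat -> C) a b c d :
  csum (fun x => csum (fun y => f x y) c d) a b = csum (fun y => csum (fun x => f x y) a b) c d.
Proof. exact (gsum_swap (G:=C_AbelianGroup) f a b c d). Qed.
Lemma RtoC_rsum f n m : RtoC (rsum f n m) = csum (fun k => RtoC (f k)) n m.
Proof. apply (gsum_morph (G := R_AbelianGroup) (H := C_AbelianGroup) RtoC).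
  intros; apply injective_projections; simpl; [reflexivity | ring]. reflexivity. Qed.
Lemma csum_Sn f n m : (n <= m)%nat -> csum f n m = (f n + csum f (S n) m)%C.
Proof. exact (sum_Sn_m (G:=C_AbelianGroup) f n m). Qed.


Ltac bdestr := repeat match goal with
 | |- context [Nat.eqb ?a ?b] => destruct (Nat.eqb_spec a b)
 | |- context [Nat.leb ?a ?b] => destruct (Nat.leb_spec a b)
 end; simpl; try (exfalso; lia).

Lemma del_one N a b k j : (1 <= j <= k)%nat -> (k <= N - 1)%nat -> k = a -> j = b -> del N a b k j = 1.
Proof. intros H1 H2 -> ->. unfold del, tri. destruct (Nat.leb_spec 1 b), (Nat.leb_spec b a), (Nat.leb_spec a (N-1)); try lia.
  rewrite !Nat.eqb_refl. reflexivity. Qed.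
Lemma del_zero N a b k j : ~ ((1 <= j <= k)%nat /\ (k <= N - 1)%nat /\ k = a /\ j = b) -> del N a b k j = 0.
Proof. intros H. unfold del, tri. destruct (Nat.leb_spec 1 j), (Nat.leb_spec j k), (Nat.leb_spec k (N-1)),
  (Nat.eqb_spec k a), (Nat.eqb_spec j b); simpl; auto; exfalso; apply H; lia. Qed.

Lemma del_cases N a b k j : (del N a b k j = 1 /\ ((1 <= j <= k)%nat /\ (k <= N - 1)%nat /\ k = a /\ j = b)) \/
  (del N a b k j = 0 /\ ~ ((1 <= j <= k)%nat /\ (k <= N - 1)%nat /\ k = a /\ j = b)).
Proof. destruct (le_dec 1 j), (le_dec j k), (le_dec k (N-1)), (Nat.eq_dec k a), (Nat.eq_dec j b);
  try (left; split; [apply del_one; lia | lia]); right; (split; [apply del_zero; lia | lia]). Qed.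

Ltac deldec := repeat match goal with |- context [del ?N ?a ?b ?k ?j] =>
   first [ rewrite (del_one N a b k j) by lia | rewrite (del_zero N a b k j) by lia
         | let H := fresh "Hd" in destruct (del_cases N a b k j) as [[-> H]|[-> H]]; try (exfalso; lia) ] end.
Ltac ifdec := repeat match goal with |- context [if ?c then _ else _] =>
   let E := fresh "E" in destruct c eqn:E;
   rewrite ?Bool.andb_true_iff, ?Bool.andb_false_iff, ?Nat.leb_le, ?Nat.leb_gt, ?Nat.eqb_eq, ?Nat.eqb_neq in E;
   try (exfalso; lia) end.

Definition eR N T k j := exp (Tv N T k j - Tv N T (k+1) (j+1)).
Definition XR N T a b j := rsum (fun k => eR N T k j * (del N a b k j - del N a b (k+1) (j+1))) j (N-1).
Definition DR N (xiR : nat -> C) T a b := csum (fun j => xiR j * RtoC (XR N T a b j))%C 1 (N-1).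
Definition SR N (xiR : nat -> C) T :=
  csum (fun i => (xiR i * csum (fun k => RtoC (exp (Tv N T k i - Tv N T (k + 1) (i + 1)))) i (N - 1))%C) 1 (N - 1).
Arguments eR : simpl never.

Lemma SR_der N xiR T a b : cder (fun t => SR N xiR (upd T a b t)) (T a b) (DR N xiR T a b).
Proof.
  unfold SR, DR. apply cder_sum. intros j Hj.
  eapply cder_val. apply cder_mult. apply cder_const. apply cder_sum. intros k Hk.
  apply cder_RtoC. apply isd_exp. apply isd_minus; apply isd_Tv.
  cbv beta. rewrite (upd_same T a b). unfold XR. rewrite RtoC_rsum.
  rewrite Cmult_0_l, Cplus_0_l. f_equal. apply csum_ext; intros k Hk. unfold eR.
  f_equal. ring.
Qed.

Lemma DR_nontri N xiR T a b : tri N a b = false -> DR N xiR T a b = 0%C.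
Proof. intros H. unfold DR. apply csum_zero; intros j _. unfold XR.
  rewrite rsum_zero. ring. intros k _. rewrite !del_nontri by auto. ring. Qed.

Lemma pderiv_psiR N xiR T a b : pderiv N (psiR N xiR) a b T = (DR N xiR T a b * psiR N xiR T)%C.
Proof.
  change (psiR N xiR) with (fun T => Cexp (SR N xiR T)).
  apply pderiv_Cexp. intros; apply SR_der. intros; apply DR_nontri; auto.
Qed.

Definition AA N T i n := rsum (fun k => exp (Tv N T (N + k - i) k - Tv N T (N + k - i - 1) k)) n i.
Definition aa N T i n := exp (Tv N T (N + n - i) n - Tv N T (N + n - i - 1) n).
Arguments AA : simpl never.
Arguments aa : simpl never.

Lemma E_up_eq N xiR i T : E_up N (psiR N xiR) i T =
  (csum (fun n => RtoC (AA N T i n) * (DR N xiR T (N + n - i - 1) n - DR N xiR T (N + n - i - 1) (n - 1))) 1 i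
   * psiR N xiR T)%C.
Proof.
  unfold E_up. rewrite <- csum_scal_r. apply csum_ext; intros n Hn.
  rewrite !pderiv_psiR. unfold AA. rewrite RtoC_rsum. ring.
Qed.

Definition V N T i a b := rsum (fun n => AA N T i n * (del N (N+n-i-1) n a b - del N (N+n-i-1) (n-1) a b)) 1 i.

Lemma V_closed N T i a b : V N T i a b =
  (if ((1 <=? b) && (b <=? i))%bool then AA N T i b * del N (N+b-i-1) b a b else 0) -
  (if ((1 <=? b+1) && (b+1 <=? i))%bool then AA N T i (b+1) * del N (N+(b+1)-i-1) (b+1-1) a b else 0).
Proof.
  unfold V. rewrite (rsum_ext _ (fun n => AA N T i n * del N (N+n-i-1) n a b - AA N T i n * del N (N+n-i-1) (n-1) a b))
    by (intros; ring).
  rewrite rsum_minus. f_equal.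
  - apply (rsum_single (fun n => AA N T i n * del N (N+n-i-1) n a b)).
    intros n Hn Hne. unfold del. destruct (Nat.eqb_spec b n); [lia|]. rewrite Bool.andb_false_r. ring.
  - apply (rsum_single (fun n => AA N T i n * del N (N+n-i-1) (n-1) a b)).
    intros n Hn Hne. rewrite del_zero by lia. ring.
Qed.

Lemma KR1 N T i j : 
  rsum (fun n => AA N T i n * (XR N T (N+n-i-1) n j - XR N T (N+n-i-1) (n-1) j)) 1 i =
  rsum (fun k => eR N T k j * (V N T i k j - V N T i (k+1) (j+1))) j (N-1).
Proof.
  transitivity (rsum (fun n => rsum (fun k => AA N T i n * (eR N T k j * (del N (N+n-i-1) n k j - del N (N+n-i-1) n (k+1) (j+1))
     - eR N T k j * (del N (N+n-i-1) (n-1) k j - del N (N+n-i-1) (n-1) (k+1) (j+1)))) j (N-1)) 1 i).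
  { apply rsum_ext; intros. unfold XR. rewrite <- rsum_minus, <- rsum_scal. reflexivity. }
  rewrite rsum_swap. apply rsum_ext; intros k Hk. unfold V. rewrite <- rsum_minus, <- rsum_scal.
  apply rsum_ext; intros; ring.
Qed.

Lemma AA_step N T i n : (n <= i)%nat -> AA N T i n = aa N T i n + AA N T i (n+1).
Proof. intros H. unfold AA. rewrite rsum_Sn by auto. rewrite Nat.add_1_r. reflexivity. Qed.
Lemma AA_end N T i : AA N T i (i+1) = 0.
Proof. unfold AA. apply rsum_empty. lia. Qed.

Lemma Tv_N N T j : (1 <= N)%nat -> Tv N T N j = 0.
Proof. intros HN. unfold Tv, tri. destruct (Nat.leb_spec N (N-1)); [lia|]. rewrite Bool.andb_false_r; auto. Qed.

Lemma F1 N T i : (1 <= i <= N-1)%nat -> eR N T (N-1) i * AA N T i i = 1.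
Proof. intros Hi. unfold AA. rewrite rsum_Sn by lia. rewrite rsum_empty by lia. unfold eR.
  replace (N + i - i)%nat with N by lia. replace (N-1+1)%nat with N by lia.
  rewrite !Tv_N by lia. rewrite Rplus_0_r, <- exp_plus. replace (_ + _) with 0 by ring. apply exp_0. Qed.

Lemma F2 N T i j : (1 <= j)%nat -> (j < i)%nat -> (i <= N-1)%nat ->
  eR N T (N+j-i-1) j * aa N T i j = eR N T (N+j-i) j * aa N T i (j+1).
Proof. intros. unfold eR, aa. rewrite <- !exp_plus. f_equal.
  replace (N+j-i-1+1)%nat with (N+j-i)%nat by lia.
  replace (N+(j+1)-i)%nat with (N+j-i+1)%nat by lia.
  replace (N+j-i+1-1)%nat with (N+j-i)%nat by lia. ring. Qed.

Lemma KR2 N T i j : (2 <= N)%nat -> (1 <= i <= N-1)%nat -> (1 <= j <= N-1)%nat ->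
  rsum (fun k => eR N T k j * (V N T i k j - V N T i (k+1) (j+1))) j (N-1) = if j =? i then 1 else 0.
Proof.
  intros HN Hi Hj.
  rewrite (rsum_ext _ (fun k => eR N T k j * (
    ((if ((1 <=? j) && (j <=? i))%bool then AA N T i j * del N (N+j-i-1) j k j else 0) -
     (if ((1 <=? j+1) && (j+1 <=? i))%bool then AA N T i (j+1) * del N (N+(j+1)-i-1) (j+1-1) k j else 0)) -
    ((if ((1 <=? j+1) && (j+1 <=? i))%bool then AA N T i (j+1) * del N (N+(j+1)-i-1) (j+1) (k+1) (j+1) else 0) -
     (if ((1 <=? j+1+1) && (j+1+1 <=? i))%bool then AA N T i (j+1+1) * del N (N+(j+1+1)-i-1) (j+1+1-1) (k+1) (j+1) else 0)))))
    by (intros; rewrite !V_closed; reflexivity).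
  rewrite (rsum_supp [(N+j-i-1)%nat; (N+j-i)%nat]).
  2:{ constructor. simpl; lia. constructor. simpl; auto. constructor. }
  2:{ intros k Hk Hn. simpl in Hn. deldec. ifdec; ring. }
  cbn [fold_right].
  destruct (lt_eq_lt_dec j i) as [[Hlt|Heq]|Hgt].
  - assert (HA1 := AA_step N T i j ltac:(lia)).
    assert (HA2 := AA_step N T i (j+1) ltac:(lia)).
    assert (HF := F2 N T i j ltac:(lia) Hlt ltac:(lia)).
    destruct (Nat.eq_dec (j+1) i).
    + assert (HA3 : AA N T i (j+1+1) = 0) by (subst i; apply AA_end).
      ifdec; deldec; rewrite ?HA1, ?HA2, ?HA3; lra.
    + ifdec; deldec; rewrite ?HA1, ?HA2; lra.
  - subst j. replace (N+i-i-1)%nat with (N-1)%nat by lia.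
    assert (HF := F1 N T i Hi). ifdec; deldec; lra.
  - ifdec; deldec; lra.
Qed.

Lemma R_main N xiR i T : (2 <= N)%nat -> (1 <= i <= N-1)%nat ->
  E_up N (psiR N xiR) i T = (xiR i * psiR N xiR T)%C.
Proof.
  intros HN Hi. rewrite E_up_eq. f_equal.
  transitivity (csum (fun n => csum (fun j => RtoC (AA N T i n) * (xiR j *
     RtoC (XR N T (N+n-i-1) n j - XR N T (N+n-i-1) (n-1) j)))%C 1 (N-1)) 1 i).
  { apply csum_ext; intros n Hn. unfold DR. rewrite <- csum_minus, <- csum_scal.
    apply csum_ext; intros. rewrite RtoC_minus. ring. }
  rewrite csum_swap.
  transitivity (csum (fun j => xiR j * RtoC (if j =? i then 1 else 0))%C 1 (N-1)).
  { apply csum_ext; intros j Hj. rewrite <- (KR2 N T i j), <- KR1 by lia.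
    rewrite RtoC_rsum, <- csum_scal. apply csum_ext; intros. rewrite RtoC_mult. ring. }
  rewrite (csum_single _ 1 (N-1) i).
  - rewrite Nat.eqb_refl. ifdec. ring.
  - intros j _ Hne. apply Nat.eqb_neq in Hne. rewrite Hne. ring.
Qed.


Definition eL N T j k := exp (Tv N T (k + j) k - Tv N T (k + j - 1) k).
Arguments eL : simpl never.
Definition YL N T a b j := rsum (fun k => eL N T j k * (del N a b (k+j) k - del N a b (k+j-1) k)) 1 (N-j).
Definition Lin N hbar lam a b :=
  csum (fun k => csum (fun i' => (mu N hbar lam k - mu N hbar lam (k+1)) * RtoC (del N a b k i'))%C 1 k) 1 (N-1).
Definition DL N hbar lam (xiL : nat -> C) T a b :=
  (Lin N hbar lam a b + csum (fun j => xiL j * RtoC (YL N T a b j))%C 1 (N-1))%C.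
Definition SL N hbar lam (xiL : nat -> C) T :=
  (csum (fun k => csum (fun i =>
            ((mu N hbar lam k - mu N hbar lam (k + 1)) * RtoC (Tv N T k i))%C) 1 k)
          1 (N - 1)
        + csum (fun i =>
            (xiL i * csum (fun k => RtoC (exp (Tv N T (k + i) k - Tv N T (k + i - 1) k)))
                            1 (N - i))%C)
          1 (N - 1))%C.

Lemma SL_der N hbar lam xiL T a b : cder (fun t => SL N hbar lam xiL (upd T a b t)) (T a b) (DL N hbar lam xiL T a b).
Proof.
  unfold SL, DL. apply cder_plus.
  - unfold Lin. apply cder_sum; intros k Hk. apply cder_sum; intros i' Hi'.
    eapply cder_val. apply cder_mult. apply cder_const. apply cder_RtoC. apply isd_Tv. cbv beta. ring.
  - apply cder_sum. intros j Hj.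
    eapply cder_val. apply cder_mult. apply cder_const. apply cder_sum. intros k Hk.
    apply cder_RtoC. apply isd_exp. apply isd_minus; apply isd_Tv.
    cbv beta. rewrite (upd_same T a b). unfold YL. rewrite RtoC_rsum.
    rewrite Cmult_0_l, Cplus_0_l. f_equal. apply csum_ext; intros k Hk. unfold eL.
    f_equal. ring.
Qed.

Lemma DL_nontri N hbar lam xiL T a b : tri N a b = false -> DL N hbar lam xiL T a b = 0%C.
Proof. intros H. unfold DL, Lin. rewrite csum_zero. rewrite csum_zero. ring.
  - intros j _. unfold YL. rewrite rsum_zero. ring. intros k _. rewrite !del_nontri by auto. ring.
  - intros k _. apply csum_zero. intros. rewrite del_nontri by auto. ring. Qed.

Lemma pderiv_psiL N hbar lam xiL T a b :
  pderiv N (psiL N hbar lam xiL) a b T = (DL N hbar lam xiL T a b * psiL N hbar lam xiL T)%C.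
Proof.
  change (psiL N hbar lam xiL) with (fun T => Cexp (SL N hbar lam xiL T)).
  apply pderiv_Cexp. intros; apply SL_der. intros; apply DL_nontri; auto.
Qed.

Lemma E_down_eq N hbar lam xiL i T : E_down N hbar lam (psiL N hbar lam xiL) i T =
  (csum (fun k => RtoC (eR N T k i) * ((mu N hbar lam i - mu N hbar lam (i+1)) +
       csum (fun s => DL N hbar lam xiL T s (i+1) - DL N hbar lam xiL T s i) i k)) i (N-1)
   * psiL N hbar lam xiL T)%C.
Proof.
  unfold E_down. rewrite <- csum_scal_r. apply csum_ext; intros k Hk.
  rewrite (csum_ext (fun s => pderiv N (psiL N hbar lam xiL) s (i + 1) T - pderiv N (psiL N hbar lam xiL) s i T)%C
     (fun s => (DL N hbar lam xiL T s (i+1) - DL N hbar lam xiL T s i) * psiL N hbar lam xiL T)%C)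
    by (intros; rewrite !pderiv_psiL; ring).
  rewrite csum_scal_r. unfold eR. ring.
Qed.

Lemma Lin_closed N hbar lam a b : Lin N hbar lam a b = if tri N a b then (mu N hbar lam a - mu N hbar lam (a+1))%C else 0%C.
Proof.
  unfold Lin.
  rewrite (csum_ext _ (fun k => if ((1 <=? b) && (b <=? k))%bool then
       ((mu N hbar lam k - mu N hbar lam (k+1)) * RtoC (del N a b k b))%C else 0%C)).
  2:{ intros k Hk. apply csum_single. intros i' _ Hne. rewrite del_zero by lia. ring. }
  rewrite (csum_single _ 1 (N-1) a).
  - unfold tri. ifdec; deldec; ring.
  - intros k _ Hne. ifdec; deldec; ring.
Qed.

Lemma Lin_sum N hbar lam i k : (1 <= i)%nat -> (i <= k <= N-1)%nat ->
  csum (fun s => Lin N hbar lam s (i+1) - Lin N hbar lam s i)%C i k = (- (mu N hbar lam i - mu N hbar lam (i+1)))%C.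
Proof.
  intros Hi Hk. rewrite (csum_single _ i k i).
  - rewrite !Lin_closed. unfold tri. ifdec; ring.
  - intros s Hs Hne. rewrite !Lin_closed. unfold tri. ifdec; ring.
Qed.

Lemma YL_closed N T a b j : YL N T a b j =
  if ((1 <=? b) && (b <=? N-j))%bool then eL N T j b * (del N a b (b+j) b - del N a b (b+j-1) b) else 0.
Proof. unfold YL. apply rsum_single. intros k _ Hne. rewrite !(del_zero N a b) by lia. ring. Qed.

Lemma P_step N T i j k : (1 <= i)%nat -> (1 <= j)%nat -> (i <= k <= N-1)%nat ->
  rsum (fun s => YL N T s (i+1) j - YL N T s i j) i k =
  (if k =? i+j-1 then eL N T j i else 0) - (if k =? i+j then eL N T j (i+1) else 0).
Proof.
  intros Hi Hj Hk.
  rewrite (rsum_ext _ (fun s =>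
     (if ((1 <=? i+1) && (i+1 <=? N-j))%bool then eL N T j (i+1) * (del N s (i+1) (i+1+j) (i+1) - del N s (i+1) (i+1+j-1) (i+1)) else 0) -
     (if ((1 <=? i) && (i <=? N-j))%bool then eL N T j i * (del N s i (i+j) i - del N s i (i+j-1) i) else 0)))
    by (intros; rewrite !YL_closed; reflexivity).
  rewrite (rsum_supp [(i+j-1)%nat; (i+j)%nat; (i+j+1)%nat]).
  2:{ constructor. simpl; lia. constructor. simpl; lia. constructor. simpl; auto. constructor. }
  2:{ intros s Hs Hn. simpl in Hn. deldec. ifdec; ring. }
  cbn [fold_right]. ifdec; deldec; ring.
Qed.

Lemma G2 N T i j : (1 <= j)%nat -> (1 <= i)%nat ->
  eR N T (i+j-1) i * eL N T j i = eR N T (i+j) i * eL N T j (i+1).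
Proof. intros. unfold eR, eL. rewrite <- !exp_plus. f_equal.
  replace (i+j-1+1)%nat with (i+j)%nat by lia.
  replace (i+1+j)%nat with (i+j+1)%nat by lia.
  replace (i+j+1-1)%nat with (i+j)%nat by lia. ring. Qed.

Lemma G1 N T i j : (2 <= N)%nat -> (1 <= i <= N-1)%nat -> j = (N - i)%nat ->
  eR N T (i+j-1) i * eL N T j i = 1.
Proof. intros HN Hi ->. unfold eR, eL.
  replace (i+(N-i)-1+1)%nat with N by lia. replace (i+(N-i))%nat with N by lia.
  replace (i+(N-i)-1)%nat with (N-1)%nat by lia.
  rewrite !Tv_N by lia. rewrite <- exp_plus. replace (_ + _) with 0 by ring. apply exp_0. Qed.

Lemma KL N T i j : (2 <= N)%nat -> (1 <= i <= N-1)%nat -> (1 <= j <= N-1)%nat ->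
  rsum (fun k => eR N T k i * rsum (fun s => YL N T s (i+1) j - YL N T s i j) i k) i (N-1) =
  if j =? N - i then 1 else 0.
Proof.
  intros HN Hi Hj.
  rewrite (rsum_ext _ (fun k => eR N T k i * ((if k =? i+j-1 then eL N T j i else 0) - (if k =? i+j then eL N T j (i+1) else 0))))
    by (intros; rewrite P_step by lia; reflexivity).
  rewrite (rsum_supp [(i+j-1)%nat; (i+j)%nat]).
  2:{ constructor. simpl; lia. constructor. simpl; auto. constructor. }
  2:{ intros k Hk Hn. simpl in Hn. ifdec; ring. }
  cbn [fold_right].
  destruct (lt_eq_lt_dec j (N-i)) as [[Hlt|Heq]|Hgt].
  - assert (H := G2 N T i j ltac:(lia) ltac:(lia)). ifdec; lra.
  - assert (H := G1 N T i j HN Hi Heq). ifdec; lra.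
  - ifdec; lra.
Qed.

Lemma L_main N hbar lam xiL i T : (2 <= N)%nat -> (1 <= i <= N-1)%nat ->
  E_down N hbar lam (psiL N hbar lam xiL) i T = (xiL (N - i)%nat * psiL N hbar lam xiL T)%C.
Proof.
  intros HN Hi. rewrite E_down_eq. f_equal.
  transitivity (csum (fun k => RtoC (eR N T k i) *
     csum (fun s => csum (fun j => xiL j * RtoC (YL N T s (i+1) j - YL N T s i j)%R) 1 (N-1)) i k)%C i (N-1)).
  { apply csum_ext; intros k Hk. f_equal.
    rewrite (csum_ext _ (fun s => (Lin N hbar lam s (i+1) - Lin N hbar lam s i) +
        csum (fun j => xiL j * RtoC (YL N T s (i+1) j - YL N T s i j)%R) 1 (N-1))%C).
    2:{ intros s Hs. unfold DL.
        rewrite (csum_ext (fun j => xiL j * RtoC (YL N T s (i+1) j - YL N T s i j)%R)%C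
                          (fun j => xiL j * RtoC (YL N T s (i+1) j) - xiL j * RtoC (YL N T s i j))%C)
          by (intros; rewrite RtoC_minus; ring).
        rewrite csum_minus. ring. }
    rewrite csum_plus, Lin_sum by lia. ring. }
  transitivity (csum (fun k => csum (fun j => xiL j * RtoC (eR N T k i * rsum (fun s => YL N T s (i+1) j - YL N T s i j) i k)%R) 1 (N-1))%C i (N-1)).
  { apply csum_ext; intros k Hk. rewrite csum_swap, <- csum_scal. apply csum_ext; intros j Hj.
    rewrite csum_scal, <- RtoC_rsum, RtoC_mult. ring. }
  rewrite csum_swap.
  transitivity (csum (fun j => xiL j * RtoC (if j =? N - i then 1 else 0))%C 1 (N-1)).
  { apply csum_ext; intros j Hj. rewrite <- (KL N T i j) by lia.
    rewrite RtoC_rsum, <- csum_scal. reflexivity. }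
  rewrite (csum_single _ 1 (N-1) (N-i)).
  - rewrite Nat.eqb_refl. ifdec. ring.
  - intros j _ Hne. apply Nat.eqb_neq in Hne. rewrite Hne. ring.
Qed.


Theorem proposition2 (N : nat) (hbar : R) (lam : nat -> R)
    (xiR xiL : nat -> C) :
  (2 <= N)%nat -> 0 < hbar ->
  (forall i : nat, (1 <= i <= N - 1)%nat -> xiR i <> 0%C) ->
  (forall i : nat, (1 <= i <= N - 1)%nat -> xiL i <> 0%C) ->
  forall i : nat, (1 <= i <= N - 1)%nat ->
  forall T : Coords,
    E_up N (psiR N xiR) i T = (xiR i * psiR N xiR T)%C /\
    E_down N hbar lam (psiL N hbar lam xiL) i T
      = (xiL (N - i)%nat * psiL N hbar lam xiL T)%C.
Proof.
  intros HN _ _ _ i Hi T. split.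
  - apply R_main; auto.
  - apply L_main; auto.
Qed.
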